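(* Let $G$ be a finite group. Every irreducible NIM-rep $(A,M)$ of the Tambara–Yamagami fusion ring $K(G,0)$ has basis $M$ consisting of at most two $G$-orbits.
   Context: The near-group fusion ring $K(G,\alpha)$ is the free $\mathbb{Z}$-module with basis $G\cup\{X\}$, with multiplication given by the group law on $G$, $gX=Xg=X$ for $g\in G$, and $X^2=\sum_{g\in G}g+\alpha X$; involution $g^*=g^{-1}$, $X^*=X$; $K(G,0)$ is the Tambara–Yamagami fusion ring. A NIM-rep of a fusion ring $(R,B)$ is a nonzero left $R$-module $A$ which is a free $\mathbb{Z}$-module with a fixed finite basis $M$, such that each $b\vartriangleright m$ is a non-negative integer combination of elements of $M$, and $(b\vartriangleright m,m')=(m,b^*\vartriangleright m')$ for the form making $M$ orthonormal. The elements of $G$ permute $M$, and the $G$-orbits partition $M$. A NIM-rep is irreducible if no proper nonempty subset of $M$ spans an $R$-submodule. *)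

(* Defs.v *)
From mathcomp Require Import all_boot all_order all_fingroup.
Set Implicit Arguments. Unset Strict Implicit. Unset Printing Implicit Defensive.

(* Basis of the near-group fusion ring K(G, alpha), G = the finite group gT:
   [Some g] is the basis element g in G, [None] is the extra element X. *)
Section NearGroup.
Variable gT : finGroupType.

Definition ng_basis := option gT.

(* Structure constants N_{a b}^c : a * b = \sum_c N_{a b}^c c  in K(G, alpha). *)
Definition ng_coef (alpha : nat) (a b c : ng_basis) : nat :=
  match a, b, c with
  | Some g, Some h, Some k => if (mulg g h == k) then 1 else 0
  | Some _, None, None => 1          (* g X = X *)
  | None, Some _, None => 1          (* X g = X *)
  | None, None, Some _ => 1          (* X^2 = sum_g g + alpha X *)
  | None, None, None => alpha
  | _, _, _ => 0
  end.

Definition ng_dual (a : ng_basis) : ng_basis :=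
  match a with Some g => Some (invg g) | None => None end.

(* A NIM-rep on the finite basis M: [act b m m'] is the (non-negative integer)
   coefficient of m' in b |> m. *)
Definition is_NIMrep (alpha : nat) (M : finType)
    (act : ng_basis -> M -> M -> nat) : Prop :=
  [/\ (0 < #|M|)%N,
      (forall m m', act (Some 1%g) m m' = (m == m' : nat)),
      (forall a b m m'',                              (* (ab) |> m = a |> (b |> m) *)
         \sum_(c : ng_basis) ng_coef alpha a b c * act c m m''
         = \sum_(m' : M) act b m m' * act a m' m'')%N &
      (forall b m m', act b m m' = act (ng_dual b) m' m)]. (* (b|>m,m') = (m,b^*|>m') *)

Definition NIM_irreducible (M : finType) (act : ng_basis -> M -> M -> nat) : Prop :=
  forall S : {set M}, S != set0 ->
    (forall b m m', m \in S -> (0 < act b m m')%N -> m' \in S) -> S = setT.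

Definition G_orbit (M : finType) (act : ng_basis -> M -> M -> nat) (m : M)
  : {set M} := [set m' | [exists g : gT, (0 < act (Some g) m m')%N]].

End NearGroup.

(* Main.v *)
Require Import Defs.
From mathcomp Require Import all_boot all_order all_fingroup.
Set Implicit Arguments. Unset Strict Implicit. Unset Printing Implicit Defensive.

Lemma sum_gt0P (I : finType) (F : I -> nat) :
  reflect (exists i, 0 < F i)%N (0 < \sum_(i : I) F i)%N.
Proof.
apply: (iffP idP).
- rewrite lt0n sum_nat_eq0 => /forallPn [i /= Hi]; exists i; by rewrite lt0n.
- move=> [i Hi]; rewrite (bigD1 i) //=; exact: leq_trans Hi (leq_addr _ _).
Qed.

Section Pf.
Variables (gT : finGroupType) (M : finType) (act : ng_basis gT -> M -> M -> nat).
Hypothesis H1 : forall m m', act (Some 1%g) m m' = (m == m' : nat).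
Hypothesis HA : forall a b m m'',
         \sum_(c : ng_basis gT) ng_coef 0 a b c * act c m m''
         = \sum_(m' : M) act b m m' * act a m' m''.
Hypothesis HD : forall b m m', act b m m' = act (ng_dual b) m' m.

Definition R m y := exists g, (0 < act (Some g) m y)%N.
Lemma RP m y : reflect (R m y) (y \in G_orbit act m).
Proof. rewrite inE; apply: (iffP existsP) => -[g Hg]; by exists g. Qed.

Lemma comp a b m x y : (0 < act b m x)%N -> (0 < act a x y)%N ->
  exists c, (0 < ng_coef 0 a b c)%N /\ (0 < act c m y)%N.
Proof.
move=> Hb Ha.
have : (0 < \sum_(m' : M) act b m m' * act a m' y)%N.
  by apply/sum_gt0P; exists x; rewrite muln_gt0 Hb Ha.
rewrite -HA => /sum_gt0P [c]; rewrite muln_gt0 => /andP [] *; by exists c.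
Qed.

Lemma R_refl m : R m m.
Proof. by exists 1%g; rewrite H1 eqxx. Qed.

Lemma R_sym m y : R m y -> R y m.
Proof. by move=> [g Hg]; exists g^-1%g; rewrite HD /= invgK. Qed.

Lemma R_trans m x y : R m x -> R x y -> R m y.
Proof.
move=> [g Hg] [h Hh]; have [[k|] [Hc Hk]] := comp Hg Hh => //.
by exists k.
Qed.

Lemma F1 m x y : R m x -> (0 < act None x y)%N -> (0 < act None m y)%N.
Proof.
move=> [g Hg] Hx; have [[k|] [Hc Hk]] := comp Hg Hx => //.
Qed.

Lemma F2 m x y : (0 < act None m x)%N -> R x y -> (0 < act None m y)%N.
Proof.
move=> Hx [g Hg]; have [[k|] [Hc Hk]] := comp Hx Hg => //.
Qed.

Lemma F3 m x y : (0 < act None m x)%N -> (0 < act None x y)%N -> R m y.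
Proof.
move=> Hx Hy; have [[k|] [Hc Hk]] := comp Hx Hy => //; by exists k.
Qed.

Lemma F3' m : exists x, (0 < act None m x)%N.
Proof.
have : (0 < \sum_(c : ng_basis gT) ng_coef 0 None None c * act c m m)%N.
  by apply/sum_gt0P; exists (Some 1%g); rewrite /= H1 eqxx.
rewrite HA => /sum_gt0P [x]; rewrite muln_gt0 => /andP [Hx _]; by exists x.
Qed.

End Pf.

Theorem corollary3p16 (gT : finGroupType) (M : finType)
    (act : ng_basis gT -> M -> M -> nat) :
  is_NIMrep 0 act -> NIM_irreducible act ->
  (#|[set G_orbit act m | m : M]| <= 2)%N.
Proof.
move=> [HM H1 HA HD] Hirr.
have [m0 _] : exists m0 : M, true.
  by move/card_gt0P: HM => [m0 _]; exists m0.
have [m1 Hm1] := F3' H1 HA m0.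
pose S := G_orbit act m0 :|: G_orbit act m1.
have HS : S = setT.
  apply: Hirr.
    by apply/set0Pn; exists m0; rewrite in_setU; apply/orP; left; apply/RP; apply: R_refl.
  move=> [g|] m y; rewrite !in_setU => /orP [] /RP Hm Hy; apply/orP.
  - left; apply/RP; exact: (R_trans HA Hm (ex_intro _ g Hy)).
  - right; apply/RP; exact: (R_trans HA Hm (ex_intro _ g Hy)).
  - right; apply/RP.
    have Hy0 := F1 HA Hm Hy.
    have H10 : (0 < act None m1 m0)%N by rewrite HD.
    exact: (F3 HA H10 Hy0).
  - left; apply/RP.
    have Hy0 := F1 HA Hm Hy.
    exact: (@F3 _ _ _ HA _ _ _ Hm1 Hy0).
have key m : G_orbit act m \in [set G_orbit act m0; G_orbit act m1].
  have : m \in S by rewrite HS inE.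
  have eqO x : R act x m -> G_orbit act m = G_orbit act x.
    move=> Hx; apply/setP => y; apply/RP/RP => Hy.
    - exact: (@R_trans _ _ _ HA _ _ _ Hx Hy).
    - exact: (@R_trans _ _ _ HA _ _ _ (R_sym HD Hx) Hy).
  rewrite in_set2 in_setU => /orP [] /RP Hm; rewrite (eqO _ Hm) eqxx ?orbT //.
apply: leq_trans (_ : #|[set G_orbit act m0; G_orbit act m1]| <= 2)%N.
  apply: subset_leq_card; apply/subsetP => O /imsetP [m _ ->]; exact: key.
by rewrite cards2; case: (_ == _).
Qed.
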